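(* Let $\sim$ denote either $\cong$ or $\simeq$. A type expression $A$ is a $\top$-variant if and only if $A\sim\top$.
   Context: Type expressions: fix a countably infinite set of type variables $X,Y,Z,\dots$. Pseudo type expressions are generated by $A::=X\mid A\to A\mid \bullet A\mid \mu X.A$ ($\mu$ binds $X$; $\alpha$-convertible expressions are identified; $\to$ associates to the right; $\bullet$ binds tighter than $\to$, which binds tighter than $\mu$). $A[B/X]$ denotes capture-avoiding substitution. $\top$ abbreviates $\mu X.\bullet X$, and $\bullet^n A$ denotes $A$ prefixed by $n$ copies of $\bullet$. The tail $t(A)$ is defined by $t(X)=X$, $t(A\to B)=t(B)$, $t(\bullet A)=\bullet t(A)$, $t(\mu X.A)=\mu X.t(A)$; it always has the form $\bullet^{m_0}\mu X_1.\bullet^{m_1}\mu X_2.\cdots\mu X_n.\bullet^{m_n}Y$. $A$ is a $\top$-variant iff $Y=X_i$ for some $1\le i\le n$ with $X_i\notin\{X_{i+1},\dots,X_n\}$ and $m_i+\dots+m_n\ge 1$. $A$ is proper in $X$ iff: a variable $Y$ is proper in $X$ iff $Y\neq X$; $\bullet A$ is always proper in $X$; $A\to B$ is proper in $X$ iff both $A,B$ are proper in $X$ or $B$ is a $\top$-variant; for $Y\ne X$, $\mu Y.A$ is proper in $X$ iff $A$ is proper in $X$ or $\mu Y.A$ is a $\top$-variant. Type expressions are the least set of pseudo type expressions containing all type variables, closed under $\to$ and $\bullet$, and containing $\mu X.A$ whenever it contains $A$ and $A$ is proper in $X$. Equality: $\cong$ is the least relation on type expressions such that: $A\cong A$; $A\cong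 B$ implies $B\cong A$; $A\cong B$ and $B\cong C$ imply $A\cong C$; $A\cong B$ implies $\bullet A\cong\bullet B$; $A\cong C$ and $B\cong D$ imply $A\to B\cong C\to D$; $A\to\top\cong\top$; $\mu X.A\cong A[\mu X.A/X]$; and if $A\cong C[A/X]$ with $C$ proper in $X$, then $A\cong\mu X.C$. $\simeq$ is the least relation satisfying the same closure conditions and additionally $\bullet(A\to B)\simeq\bullet A\to\bullet B$. *)

(* Defs.v *)
(* Type expressions are represented with de Bruijn indices,
   so alpha-convertible expressions are literally identified.  A type
   variable is a natural number (index); under a [TMu] binder index 0
   refers to the bound variable. *)
From Stdlib Require Import List Arith.
Import ListNotations.

Inductive ty : Type :=
| TVar   : nat -> ty
| TArr   : ty -> ty -> ty
| TLater : ty -> ty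
| TMu    : ty -> ty.

Definition top : ty := TMu (TLater (TVar 0)).

Fixpoint later_n (n : nat) (A : ty) : ty :=
  match n with 0 => A | S k => TLater (later_n k A) end.

Fixpoint lift (c : nat) (A : ty) : ty :=
  match A with
  | TVar n => if n <? c then TVar n else TVar (S n)
  | TArr A B => TArr (lift c A) (lift c B)
  | TLater A => TLater (lift c A)
  | TMu A => TMu (lift (S c) A)
  end.

Fixpoint subst (k : nat) (s : ty) (A : ty) : ty :=
  match A with
  | TVar n => if n <? k then TVar n
              else if n =? k then s else TVar (pred n)
  | TArr A B => TArr (subst k s A) (subst k s B)
  | TLater A => TLater (subst k s A)
  | TMu A => TMu (subst (S k) (lift 0 s) A)
  end.

(* A[B/X] where X is the variable bound by the enclosing mu of body A *)
Definition subst0 (A B : ty) : ty := subst 0 B A.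

Fixpoint tail (A : ty) : ty :=
  match A with
  | TVar n => TVar n
  | TArr _ B => tail B
  | TLater A => TLater (tail A)
  | TMu A => TMu (tail A)
  end.

(* On a tail  bullet^{m0} mu X1. bullet^{m1} ... mu Xn. bullet^{mn} Y :
   [env] records, for each enclosing mu (innermost first), whether a
   bullet occurred between that binder and the current position.
   The variable Y = X_i with X_i not among X_{i+1..n} is exactly the de Bruijn
   occurrence bound by binder i, and m_i + ... + m_n >= 1 means a bullet
   occurs after that binder. *)
Fixpoint topvar_aux (env : list bool) (A : ty) : bool :=
  match A with
  | TVar k => nth k env false
  | TArr _ _ => false
  | TLater A => topvar_aux (map (fun _ => true) env) A
  | TMu A => topvar_aux (false :: env) A
  end.

Definition top_variant (A : ty) : bool := topvar_aux [] (tail A).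

Fixpoint proper (x : nat) (A : ty) : bool :=
  match A with
  | TVar y => negb (y =? x)
  | TLater _ => true
  | TArr A B => (proper x A && proper x B) || top_variant B
  | TMu A => proper (S x) A || top_variant (TMu A)
  end.

Fixpoint wf (A : ty) : bool :=
  match A with
  | TVar _ => true
  | TArr A B => wf A && wf B
  | TLater A => wf A
  | TMu A => wf A && proper 0 A
  end.

Inductive ty_eq : ty -> ty -> Prop :=
| teq_refl A : wf A = true -> ty_eq A A
| teq_sym A B : ty_eq A B -> ty_eq B A
| teq_trans A B C : ty_eq A B -> ty_eq B C -> ty_eq A C
| teq_later A B : ty_eq A B -> ty_eq (TLater A) (TLater B)
| teq_arr A B C D : ty_eq A C -> ty_eq B D -> ty_eq (TArr A B) (TArr C D)
| teq_arrtop A : wf A = true -> ty_eq (TArr A top) top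
| teq_unfold A : wf (TMu A) = true -> wf (subst0 A (TMu A)) = true ->
    ty_eq (TMu A) (subst0 A (TMu A))
| teq_fold A C : wf A = true -> wf (TMu C) = true ->
    ty_eq A (subst0 C A) -> ty_eq A (TMu C).

Inductive ty_eqd : ty -> ty -> Prop :=
| teqd_refl A : wf A = true -> ty_eqd A A
| teqd_sym A B : ty_eqd A B -> ty_eqd B A
| teqd_trans A B C : ty_eqd A B -> ty_eqd B C -> ty_eqd A C
| teqd_later A B : ty_eqd A B -> ty_eqd (TLater A) (TLater B)
| teqd_arr A B C D : ty_eqd A C -> ty_eqd B D -> ty_eqd (TArr A B) (TArr C D)
| teqd_arrtop A : wf A = true -> ty_eqd (TArr A top) top
| teqd_unfold A : wf (TMu A) = true -> wf (subst0 A (TMu A)) = true ->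
    ty_eqd (TMu A) (subst0 A (TMu A))
| teqd_fold A C : wf A = true -> wf (TMu C) = true ->
    ty_eqd A (subst0 C A) -> ty_eqd A (TMu C)
| teqd_dist A B : wf A = true -> wf B = true ->
    ty_eqd (TLater (TArr A B)) (TArr (TLater A) (TLater B)).

(* Main.v *)
Require Import Defs.
From Stdlib Require Import List Arith Lia Bool.
Import ListNotations.

Inductive val := VTop | VFin (n x : nat).
Definition addb n v := match v with VTop => VTop | VFin m y => VFin (n+m) y end.
Definition muI v := match v with VTop => VTop | VFin n 0 => VTop | VFin n (S x) => VFin n x end.
Fixpoint I (A : ty) : val :=
  match A with
  | TVar x => VFin 0 x
  | TArr _ B => I B
  | TLater A => addb 1 (I A)
  | TMu A => muI (I A)
  end.
Definition liftI c v := match v with VTop => VTop | VFin n x => VFin n (if x <? c then x else S x) end.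
Definition substI k w v := match v with VTop => VTop
  | VFin n x => if x <? k then VFin n x else if x =? k then addb n w else VFin n (pred x) end.

Ltac cmp :=
  repeat match goal with
  | |- context [?a <? ?b] => destruct (Nat.ltb_spec a b)
  | |- context [?a =? ?b] => destruct (Nat.eqb_spec a b)
  end.

Lemma I_lift : forall A c, I (lift c A) = liftI c (I A).
Proof.
  induction A; intros; simpl.
  - cmp; reflexivity.
  - auto.
  - rewrite IHA; destruct (I A); reflexivity.
  - rewrite IHA. destruct (I A) as [|n [|x]]; simpl; auto.
    cmp; simpl; try lia; reflexivity.
Qed.

Lemma I_subst : forall A k s, I (subst k s A) = substI k (I s) (I A).
Proof.
  induction A; intros; simpl.
  - cmp; simpl; try reflexivity. destruct (I s); reflexivity.
  - auto.
  - rewrite IHA; destruct (I A) as [|n x]; simpl; auto.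
    cmp; simpl; try reflexivity. destruct (I s); reflexivity.
  - rewrite IHA, I_lift. destruct (I A) as [|n [|x]]; simpl; auto.
    cmp; simpl; try lia.
    + reflexivity.
    + destruct (I s) as [|m y]; simpl; auto.
    + destruct x; [lia|]. reflexivity.
Qed.

Lemma nth_map_true : forall (env : list bool) x,
  nth x (map (fun _ => true) env) false = (x <? length env).
Proof.
  induction env; intros [|x]; simpl; auto.
Qed.

Lemma L1 : forall B env, topvar_aux env (Defs.tail B) = true ->
  I B = VTop \/ exists n x, I B = VFin n x /\ x < length env /\ (1 <= n \/ nth x env false = true).
Proof.
  induction B; intros env H; simpl in *.
  - right. exists 0, n. split; auto. split; auto.
    destruct (Nat.lt_ge_cases n (length env)); auto.
    rewrite nth_overflow in H; auto. discriminate.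
  - auto.
  - destruct (IHB _ H) as [E|(n&x&E&Hl&_)]; rewrite E; auto.
    right. exists (S n), x. rewrite length_map in Hl. simpl. repeat split; auto. left; lia.
  - destruct (IHB _ H) as [E|(n&x&E&Hl&Hn)]; rewrite E; auto.
    destruct x; simpl; auto.
    right. exists n, x. simpl in *. repeat split; try lia. auto.
Qed.

Lemma L1' : forall B, top_variant B = true -> I B = VTop.
Proof.
  intros B H. destruct (L1 B [] H) as [E|(n&x&_&Hl&_)]; auto. simpl in Hl; lia.
Qed.

Lemma L3 : forall A env n x, I A = VFin n x ->
  topvar_aux env (Defs.tail A) = (if 0 <? n then x <? length env else nth x env false).
Proof.
  induction A; intros env m x H; simpl in *.
  - inversion H; subst. reflexivity.
  - auto.
  - destruct (I A) as [|k y] eqn:E; simpl in H; inversion H; subst.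
    erewrite IHA by (exact E || reflexivity). rewrite length_map. simpl.
    destruct (0 <? k); auto. apply nth_map_true.
  - destruct (I A) as [|k [|y]] eqn:E; simpl in H; inversion H; subst.
    erewrite IHA by (exact E || reflexivity). reflexivity.
Qed.

Lemma P : forall C x, proper x C = true -> I C <> VFin 0 x.
Proof.
  induction C; intros x H; simpl in *.
  - intro E; inversion E; subst. rewrite Nat.eqb_refl in H. discriminate.
  - apply orb_true_iff in H. destruct H as [H|H].
    + apply andb_prop in H. apply IHC2; tauto.
    + rewrite (L1' _ H). discriminate.
  - destruct (I C); discriminate.
  - apply orb_true_iff in H. destruct H as [H|H].
    + specialize (IHC _ H). destruct (I C) as [|n [|y]]; simpl; try discriminate.
      intro E; inversion E; subst. auto.
    + pose proof (L1' _ H) as E. simpl in E. rewrite E. discriminate.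
Qed.

Lemma L2 : forall A env, wf A = true -> I A = VTop -> topvar_aux env (Defs.tail A) = true.
Proof.
  induction A; intros env W H; simpl in *.
  - discriminate.
  - apply andb_prop in W. apply IHA2; tauto.
  - apply IHA; auto. destruct (I A); simpl in H; auto; discriminate.
  - apply andb_prop in W. destruct W as [W1 W2].
    destruct (I A) as [|n [|y]] eqn:E; simpl in H; try discriminate.
    + apply IHA; auto.
    + rewrite (L3 _ _ n 0 E). destruct n; simpl.
      * exfalso. apply (P _ _ W2 E).
      * reflexivity.
Qed.

Lemma L2' : forall A, wf A = true -> I A = VTop -> top_variant A = true.
Proof. intros; apply L2; auto. Qed.

Lemma inv_d : forall A B, ty_eqd A B -> I A = I B.
Proof.
  intros A B H; induction H; simpl; try congruence.
  - unfold subst0. rewrite I_subst. simpl.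
    destruct (I A) as [|n [|x]]; simpl; auto.
  - unfold subst0 in IHty_eqd. rewrite I_subst in IHty_eqd.
    simpl in H0. apply andb_prop in H0. destruct H0 as [_ Hp].
    pose proof (P _ _ Hp) as HP.
    destruct (I C) as [|n [|x]] eqn:E; simpl in *; auto.
    destruct n; [exfalso; auto|].
    destruct (I A) as [|m y]; simpl in *; auto. inversion IHty_eqd; lia.
Qed.

Lemma embed : forall A B, ty_eq A B -> ty_eqd A B.
Proof.
  intros A B H; induction H.
  - apply teqd_refl; auto.
  - apply teqd_sym; auto.
  - eapply teqd_trans; eauto.
  - apply teqd_later; auto.
  - apply teqd_arr; auto.
  - apply teqd_arrtop; auto.
  - apply teqd_unfold; auto.
  - apply teqd_fold; auto.
Qed.

Definition up (s : nat -> option nat) (x : nat) : option nat :=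
  match x with 0 => Some 0 | S y => option_map S (s y) end.

Fixpoint psub (s : nat -> option nat) (A : ty) : ty :=
  match A with
  | TVar x => match s x with None => top | Some y => TVar y end
  | TArr A B => TArr (psub s A) (psub s B)
  | TLater A => TLater (psub s A)
  | TMu A => TMu (psub (up s) A)
  end.

Definition psubI s v := match v with VTop => VTop
  | VFin n x => match s x with None => VTop | Some z => VFin n z end end.

Lemma I_psub : forall A s, I (psub s A) = psubI s (I A).
Proof.
  induction A; intros s; simpl.
  - destruct (s n); reflexivity.
  - auto.
  - rewrite IHA. destruct (I A) as [|n x]; simpl; auto. destruct (s x); reflexivity.
  - rewrite IHA. destruct (I A) as [|n [|x]]; simpl; auto. destruct (s x); reflexivity.
Qed.

Lemma psub_id : forall A s, (forall x, s x = Some x) -> psub s A = A.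
Proof.
  induction A; intros s H; simpl.
  - rewrite H; reflexivity.
  - rewrite IHA1, IHA2; auto.
  - rewrite IHA; auto.
  - rewrite IHA; auto. intros [|x]; simpl; auto. rewrite H; reflexivity.
Qed.

Definition fk k (o : option nat) := match o with None => None
  | Some z => if z <? k then Some z else if z =? k then None else Some (pred z) end.

Lemma subst_psub : forall B k s t, (forall x, t x = fk k (s x)) ->
  subst k top (psub s B) = psub t B.
Proof.
  induction B; intros k s t H; simpl.
  - rewrite H. destruct (s n) as [z|]; simpl; [|reflexivity].
    cmp; reflexivity.
  - rewrite (IHB1 k s t), (IHB2 k s t); auto.
  - rewrite (IHB k s t); auto.
  - f_equal. apply IHB. intros [|x]; simpl.
    + reflexivity.
    + rewrite H. destruct (s x) as [z|]; simpl; auto.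
      cmp; simpl; try lia; auto. destruct z; [lia|]. reflexivity.
Qed.

Lemma tv_psub : forall B s, wf (psub s B) = true -> top_variant B = true ->
  top_variant (psub s B) = true.
Proof.
  intros B s W H. apply L2'; auto. rewrite I_psub, (L1' _ H). reflexivity.
Qed.

Lemma W : forall A s, wf A = true -> wf (psub s A) = true /\
  (forall x' x, s x' = Some x -> (forall y, y <> x' -> s y <> Some x) ->
     proper x' A = true -> proper x (psub s A) = true).
Proof.
  induction A; intros s HW; simpl in *.
  - split.
    + destruct (s n); reflexivity.
    + intros x' x E1 E2 Hp. destruct (s n) as [z|] eqn:E; [|reflexivity].
      apply negb_true_iff, Nat.eqb_neq in Hp.
      apply negb_true_iff, Nat.eqb_neq. intro; subst. apply (E2 n Hp E).
  - apply andb_prop in HW. destruct HW as [W1 W2].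
    destruct (IHA1 s W1) as [IW1 IP1]. destruct (IHA2 s W2) as [IW2 IP2].
    split.
    + rewrite IW1, IW2; reflexivity.
    + intros x' x E1 E2 Hp. apply orb_true_iff in Hp. apply orb_true_iff.
      destruct Hp as [Hp|Hp].
      * left. apply andb_prop in Hp. destruct Hp. rewrite (IP1 x' x), (IP2 x' x); auto.
      * right. apply tv_psub; auto.
  - destruct (IHA s HW) as [IW _]. split; auto.
  - apply andb_prop in HW. destruct HW as [W1 W2].
    destruct (IHA (up s) W1) as [IW IP].
    assert (Hw : wf (TMu (psub (up s) A)) = true).
    { simpl. rewrite IW. simpl. apply (IP 0 0); auto.
      intros [|y] Hy; simpl; [lia|]. destruct (s y); simpl; discriminate. }
    split; [exact Hw|].
    intros x' x E1 E2 Hp. apply orb_true_iff in Hp. apply orb_true_iff.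
    destruct Hp as [Hp|Hp].
    + left. apply (IP (S x') (S x)); auto.
      * simpl. rewrite E1. reflexivity.
      * intros [|y] Hy; simpl; [discriminate|].
        destruct (s y) as [z|] eqn:E; simpl; [|discriminate].
        intro Ez; inversion Ez; subst. apply (E2 y); auto.
    + right. apply (tv_psub (TMu A) s); auto.
Qed.

Lemma later_top : ty_eq (TLater top) top.
Proof.
  apply teq_sym. exact (teq_unfold (TLater (TVar 0)) eq_refl eq_refl).
Qed.

Lemma C : forall A s, wf A = true -> psubI s (I A) = VTop -> ty_eq (psub s A) top.
Proof.
  induction A; intros s HW H; simpl in *.
  - destruct (s n); [discriminate|]. apply teq_refl; reflexivity.
  - apply andb_prop in HW. destruct HW as [W1 W2].
    apply teq_trans with (TArr (psub s A1) top).
    + apply teq_arr; [apply teq_refl; apply W; auto|]. apply IHA2; auto.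
    + apply teq_arrtop. apply W; auto.
  - apply teq_trans with (TLater top); [|apply later_top].
    apply teq_later. apply IHA; auto.
    destruct (I A) as [|n x]; simpl in *; auto. destruct (s x); auto; discriminate.
  - pose proof (W (TMu A) s HW) as [Hw _]. simpl in Hw.
    apply andb_prop in HW. destruct HW as [W1 W2].
    apply teq_sym. apply teq_fold; [reflexivity|exact Hw|].
    unfold subst0.
    rewrite (subst_psub A 0 (up s) (fun x => match x with 0 => None | S y => s y end)).
    + apply teq_sym. apply IHA; auto.
      destruct (I A) as [|n [|x]]; simpl in *; auto.
    + intros [|x]; simpl; auto. destruct (s x); reflexivity.
Qed.

Theorem theorem4 (A : ty) (HA : wf A = true) :
  (top_variant A = true <-> ty_eq A top) /\
  (top_variant A = true <-> ty_eqd A top).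
Proof.
  assert (F : top_variant A = true -> ty_eq A top).
  { intro Ht. pose proof (C A (fun x => Some x) HA) as Hc.
    rewrite psub_id in Hc by auto. apply Hc. rewrite (L1' _ Ht). reflexivity. }
  assert (G : ty_eqd A top -> top_variant A = true).
  { intro Hq. apply L2'; auto. apply inv_d in Hq. rewrite Hq. reflexivity. }
  split; split; auto.
  - intro; apply G, embed; auto.
  - intro; apply embed, F; auto.
Qed.
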